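(* Let $a>4$, $d\ge 4$, and let $G$ be generated by the security model $\mathcal{S}(n,a,d)$. Let $b_0>0$ be a constant, $\delta=\log^{-b_0}n$, $T_0=(1-\delta)n$, and let $b_1$ satisfy $2<b_1<a-b_0$. Then with probability $1-o(1)$, every homochromatic set created before time step $T_0$ has size $\Omega(\log^{b_1}n)$.
   Context: Security model $\mathcal{S}(n,a,d)$ (homophyly exponent $a$, natural number $d$): start with an initial graph $G_2$ on two nodes, each of which is a seed node with its own distinct color. For $i=3,\dots,n$, given $G_{i-1}$, let $p_i=(\log i)^{-a}$ and create a new node $v$ (at time step $i$). With probability $p_i$, $v$ receives a brand-new color $c$ and is called the seed node of $c$; then one edge $(v,u)$ is added with $u$ chosen with probability proportional to degrees in $G_{i-1}$, and $d-1$ edges $(v,u_j)$ are added, each $u_j$ chosen uniformly at random among all seed nodes of $G_{i-1}$. Otherwise, $v$ picks a color $c$ uniformly at random among all colors present in $G_{i-1}$, takes color $c$, and $d$ edges $(v,u_j)$ are added, each $u_j$ chosen with probability proportional to degree among the nodes of color $c$ in $G_{i-1}$. The network is $G=G_n$. A homochromatic set is the set of all nodes of $G$ of one color; it is created at the time step its seed node is created. *)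

(* Defs.v *)
From Stdlib Require Import Reals List Arith Lra.
Import ListNotations.
Open Scope R_scope.

(** Finite discrete distributions, as lists of (weight, outcome). *)
Definition dist (A : Type) := list (R * A).

Definition ret {A} (x : A) : dist A := [(1, x)].

Definition bind {A B} (m : dist A) (f : A -> dist B) : dist B :=
  flat_map (fun '(p, x) => map (fun '(q, y) => (p * q, y)) (f x)) m.

Definition mix {A} (p : R) (m1 m2 : dist A) : dist A :=
  map (fun '(q, x) => (p * q, x)) m1 ++ map (fun '(q, x) => ((1 - p) * q, x)) m2.

Definition uniform (l : list nat) : dist nat :=
  map (fun u => (/ INR (length l), u)) l.

Definition weighted (w : nat -> R) (l : list nat) : dist nat :=
  let tot := fold_right Rplus 0 (map w l) in
  map (fun u => (w u / tot, u)) l.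

Fixpoint iid {A} (k : nat) (m : dist A) : dist (list A) :=
  match k with
  | O => ret []
  | S k' => bind m (fun x => bind (iid k' m) (fun xs => ret (x :: xs)))
  end.

Definition prob {A} (m : dist A) (E : A -> bool) : R :=
  fold_right Rplus 0 (map (fun '(p, x) => if E x then p else 0) m).

(** Nodes are 0,1,...,(number of nodes - 1), node j created
    at time step j+1.  [col] gives the color of each node; colors are
    numbered 0,1,... in order of creation, and [seeds] lists the seed node
    of each color (color c has seed [nth c seeds 0]).  [edges] is the
    multiset of (undirected) edges. *)
Record state := mkState { col : list nat; seeds : list nat; edges : list (nat * nat) }.

Definition nnodes (G : state) : nat := length (col G).

Definition color_of (G : state) (u : nat) : nat := nth u (col G) 0%nat.

Definition deg (G : state) (u : nat) : R :=
  INR (length (filter (fun e => Nat.eqb (fst e) u) (edges G))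
       + length (filter (fun e => Nat.eqb (snd e) u) (edges G))).

Definition nodes_of_color (G : state) (c : nat) : list nat :=
  filter (fun u => Nat.eqb (color_of G u) c) (seq 0 (nnodes G)).

Definition color_time (G : state) (c : nat) : nat := S (nth c (seeds G) 0%nat).

Definition G2 : state := mkState [0%nat; 1%nat] [0%nat; 1%nat] [(0%nat, 1%nat)].

Definition p_ (a : R) (i : nat) : R := Rpower (ln (INR i)) (- a).

Definition step (a : R) (d : nat) (i : nat) (G : state) : dist state :=
  let v := nnodes G in
  mix (p_ a i)
    (bind (weighted (deg G) (seq 0 v)) (fun u =>
     bind (iid (d - 1)%nat (uniform (seeds G))) (fun us =>
     ret (mkState (col G ++ [length (seeds G)]) (seeds G ++ [v])
                  (edges G ++ map (fun w => (v, w)) (u :: us))))))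
    (bind (uniform (seq 0 (length (seeds G)))) (fun c =>
     bind (iid d (weighted (deg G) (nodes_of_color G c))) (fun us =>
     ret (mkState (col G ++ [c]) (seeds G)
                  (edges G ++ map (fun w => (v, w)) us))))).

(** distribution of G_{k+2} *)
Fixpoint model_aux (a : R) (d : nat) (k : nat) : dist state :=
  match k with
  | O => ret G2
  | S k' => bind (model_aux a d k') (step a d (k + 2))
  end.

Definition security_model (a : R) (d n : nat) : dist state :=
  model_aux a d (n - 2).

Definition early_sets_large (T0 bound : R) (G : state) : bool :=
  forallb (fun c =>
    if Rlt_dec (INR (color_time G c)) T0 then
      if Rle_dec bound (INR (length (nodes_of_color G c))) then true else false
    else true)
    (seq 0 (length (seeds G))).

(* Main.v *)
Require Import Defs.
From Stdlib Require Import Reals List Arith Lra Lia ZArith.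
Import ListNotations.
Open Scope R_scope.

Definition E {A} (m : Defs.dist A) (f : A -> R) : R :=
  fold_right Rplus 0 (map (fun px => fst px * f (snd px)) m).

Lemma E_nil {A} (f : A -> R) : E [] f = 0.
Proof. reflexivity. Qed.
Lemma E_cons {A} p x (m : Defs.dist A) f : E ((p,x)::m) f = p * f x + E m f.
Proof. reflexivity. Qed.
Lemma E_app {A} (m1 m2 : Defs.dist A) f : E (m1 ++ m2) f = E m1 f + E m2 f.
Proof. induction m1 as [|[p x] m IH]; unfold E in *; simpl. lra. rewrite IH. lra. Qed.
Lemma E_ext {A} (m : Defs.dist A) f g : (forall x, f x = g x) -> E m f = E m g.
Proof. intro H. induction m as [|[p x] m IH]. reflexivity. rewrite !E_cons, IH, H. reflexivity. Qed.
Lemma E_scale {A} (m : Defs.dist A) p f :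
  E (map (fun '(q, y) => (p * q, y)) m) f = p * E m f.
Proof. induction m as [|[q y] m IH]. unfold E; simpl; ring. simpl. rewrite !E_cons, IH. ring. Qed.
Lemma E_ret {A} (x : A) f : E (ret x) f = f x.
Proof. unfold E, ret; simpl; ring. Qed.
Lemma E_bind {A B} (m : Defs.dist A) (g : A -> Defs.dist B) f :
  E (bind m g) f = E m (fun x => E (g x) f).
Proof. induction m as [|[p x] m IH]. reflexivity. unfold bind in *. simpl.
 rewrite E_app, E_scale, E_cons, IH. reflexivity. Qed.
Lemma E_mix {A} p (m1 m2 : Defs.dist A) f : E (mix p m1 m2) f = p * E m1 f + (1 - p) * E m2 f.
Proof. unfold mix. rewrite E_app, !E_scale. reflexivity. Qed.
Lemma E_linear {A} (m : Defs.dist A) f g a b : E m (fun x => a * f x + b * g x) = a * E m f + b * E m g.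
Proof. induction m as [|[p x] m IH]. unfold E; simpl; ring. rewrite !E_cons, IH. ring. Qed.
Lemma prob_E {A} (m : Defs.dist A) Ev : prob m Ev = E m (fun x => if Ev x then 1 else 0).
Proof. induction m as [|[p x] m IH]. reflexivity. unfold prob in *; simpl. rewrite IH. unfold E; simpl.
 destruct (Ev x); ring. Qed.

Definition gd {A} (P : A -> Prop) (m : Defs.dist A) : Prop :=
  Forall (fun px => 0 <= fst px /\ P (snd px)) m.

Lemma E_mono {A} (P : A -> Prop) m f g : gd P m -> (forall x, P x -> f x <= g x) -> E m f <= E m g.
Proof. intros H Hfg. induction H as [|[p x] m [Hp Hx] _ IH]. unfold E; simpl; lra.
 simpl in Hp, Hx. rewrite !E_cons. specialize (Hfg x Hx). nra. Qed.
Lemma E_nonneg {A} (P : A -> Prop) m f : gd P m -> (forall x, P x -> 0 <= f x) -> 0 <= E m f.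
Proof. intros H Hf. replace 0 with (E m (fun _ => 0)). eapply E_mono; eauto.
 clear. induction m as [|[p x] m IH]. reflexivity. rewrite E_cons, IH. ring. Qed.
Lemma E_const {A} (m : Defs.dist A) k : E m (fun _ => k) = E m (fun _ => 1) * k.
Proof. induction m as [|[p x] m IH]. unfold E; simpl; ring. rewrite !E_cons, IH. ring. Qed.

Lemma gd_app {A} (P : A -> Prop) m1 m2 : gd P m1 -> gd P m2 -> gd P (m1 ++ m2).
Proof. unfold gd. intros; apply Forall_app; auto. Qed.
Lemma gd_scale {A} (P : A -> Prop) p m : 0 <= p -> gd P m -> gd P (map (fun '(q, y) => (p * q, y)) m).
Proof. intros Hp H. induction H as [|[q y] m [Hq Hy] _ IH]; simpl; constructor; auto. simpl. split; auto.
 apply Rmult_le_pos; auto. Qed.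
Lemma gd_ret {A} (P : A -> Prop) x : P x -> gd P (ret x).
Proof. intro. constructor; [simpl; split; [lra|auto] | constructor]. Qed.
Lemma gd_bind {A B} (P : A -> Prop) (Q : B -> Prop) m g :
  gd P m -> (forall x, P x -> gd Q (g x)) -> gd Q (bind m g).
Proof. intros H Hg. induction H as [|[p x] m [Hp Hx] _ IH]. constructor. unfold bind in *; simpl.
 apply gd_app; auto. apply gd_scale; auto. Qed.
Lemma gd_mix {A} (P : A -> Prop) p m1 m2 : 0 <= p <= 1 -> gd P m1 -> gd P m2 -> gd P (mix p m1 m2).
Proof. intros. unfold mix. apply gd_app; apply gd_scale; auto; lra. Qed.
Lemma gd_weaken {A} (P Q : A -> Prop) m : (forall x, P x -> Q x) -> gd P m -> gd Q m.
Proof. intros H. apply Forall_impl. intros [p x] [? ?]; split; auto. Qed.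

Definition sumf {A} (l : list A) (f : A -> R) : R := fold_right Rplus 0 (map f l).

Lemma sumf_nil {A} (f : A -> R) : sumf [] f = 0. Proof. reflexivity. Qed.
Lemma sumf_cons {A} x (l : list A) f : sumf (x :: l) f = f x + sumf l f. Proof. reflexivity. Qed.
Lemma sumf_app {A} (l1 l2 : list A) f : sumf (l1 ++ l2) f = sumf l1 f + sumf l2 f.
Proof. induction l1; rewrite ?sumf_nil; simpl app; rewrite ?sumf_cons; try rewrite IHl1; ring. Qed.
Lemma sumf_ext {A} (l : list A) f g : (forall x, In x l -> f x = g x) -> sumf l f = sumf l g.
Proof. induction l; intros H. reflexivity. rewrite !sumf_cons, H, IHl; auto. intros; apply H; simpl; auto. left; auto. Qed.
Lemma sumf_mono {A} (l : list A) f g : (forall x, In x l -> f x <= g x) -> sumf l f <= sumf l g.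
Proof. induction l; intros H. rewrite !sumf_nil; lra. rewrite !sumf_cons.
 assert (f a <= g a) by (apply H; left; auto). assert (sumf l f <= sumf l g) by (apply IHl; intros; apply H; right; auto). lra. Qed.
Lemma sumf_nonneg {A} (l : list A) f : (forall x, In x l -> 0 <= f x) -> 0 <= sumf l f.
Proof. intros H. replace 0 with (sumf l (fun _ => 0)). apply sumf_mono; auto.
 clear; induction l. reflexivity. rewrite sumf_cons, IHl; ring. Qed.
Lemma sumf_linear {A} (l : list A) f g a b : sumf l (fun x => a * f x + b * g x) = a * sumf l f + b * sumf l g.
Proof. induction l. rewrite !sumf_nil; ring. rewrite !sumf_cons, IHl; ring. Qed.
Lemma sumf_const {A} (l : list A) k : sumf l (fun _ => k) = INR (length l) * k.
Proof. induction l. rewrite sumf_nil; simpl; ring. rewrite sumf_cons, IHl. simpl length. rewrite S_INR; ring. Qed.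
Lemma sumf_ge_elem {A} (l : list A) f x : (forall y, In y l -> 0 <= f y) -> In x l -> f x <= sumf l f.
Proof. induction l; intros H Hx. destruct Hx. rewrite sumf_cons. destruct Hx as [<-|Hx].
 assert (0 <= sumf l f) by (apply sumf_nonneg; intros; apply H; right; auto). lra.
 assert (0 <= f a) by (apply H; left; auto). assert (f x <= sumf l f) by (apply IHl; auto; intros; apply H; right; auto). lra. Qed.
Lemma sumf_delta (C c0 : nat) h : (c0 < C)%nat ->
  sumf (seq 0 C) (fun c => if Nat.eqb c c0 then h c else 0) = h c0.
Proof. intro H. replace C with (c0 + 1 + (C - c0 - 1))%nat by lia.
 rewrite !seq_app, !sumf_app. simpl seq. rewrite sumf_cons, sumf_nil, Nat.eqb_refl.
 rewrite (sumf_ext _ _ (fun _ => 0)), (sumf_ext (seq (0 + c0 + 1) _) _ (fun _ => 0)), !sumf_const. ring.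
 - intros x Hx. apply in_seq in Hx. destruct (Nat.eqb_spec x c0); [lia|auto].
 - intros x Hx. apply in_seq in Hx. destruct (Nat.eqb_spec x c0); [lia|auto]. Qed.

Lemma E_map_sum {A} (l : list A) (w : A -> R) (f : A -> R) :
  E (map (fun u => (w u, u)) l) f = sumf l (fun u => w u * f u).
Proof. induction l. reflexivity. simpl map. rewrite E_cons, sumf_cons, IHl. reflexivity. Qed.



Lemma E_uniform l f : E (uniform l) f = / INR (length l) * sumf l f.
Proof. unfold uniform. rewrite E_map_sum. generalize (/ INR (length l)). intro k.
 induction l. rewrite !sumf_nil; ring. rewrite !sumf_cons, IHl. ring. Qed.

Definition tot (w : nat -> R) (l : list nat) := fold_right Rplus 0 (map w l).
Lemma tot_sumf w l : tot w l = sumf l w. Proof. reflexivity. Qed.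

Lemma E_weighted w l f : E (weighted w l) f = sumf l (fun u => w u / tot w l * f u).
Proof. unfold weighted. rewrite E_map_sum. reflexivity. Qed.

Lemma mass_weighted w l : tot w l <> 0 -> E (weighted w l) (fun _ => 1) = 1.
Proof. intro H. rewrite E_weighted. unfold Rdiv.
 rewrite (sumf_ext _ _ (fun u => / tot w l * w u + 0 * w u)) by (intros; ring).
 rewrite sumf_linear, <- tot_sumf. field. auto. Qed.

Lemma mass_uniform (l : list nat) : l <> [] -> E (uniform l) (fun _ => 1) = 1.
Proof. intro H. rewrite E_uniform, sumf_const. destruct l. congruence. simpl length.
 field. rewrite S_INR. pose proof (pos_INR (length l)). lra. Qed.

Lemma mass_iid {A} k (m : Defs.dist A) : E m (fun _ => 1) = 1 -> E (iid k m) (fun _ => 1) = 1.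
Proof. intro H. induction k; simpl. rewrite E_ret; auto.
 rewrite E_bind. rewrite (E_ext _ _ (fun _ => 1)). auto. intro x.
 rewrite E_bind. rewrite (E_ext _ _ (fun _ => 1)). auto. intros; rewrite E_ret; auto. Qed.

Lemma gd_uniform (l : list nat) : gd (fun x => In x l) (uniform l).
Proof. unfold uniform, gd. rewrite Forall_forall. intros [p x] Hin. apply in_map_iff in Hin.
 destruct Hin as [u [Hu Hin]]. inversion Hu; subst. simpl. split; auto.
 destruct l. destruct Hin. left. apply Rinv_0_lt_compat. apply lt_0_INR. simpl; lia. Qed.

Lemma gd_weighted (w : nat -> R) l : (forall u, 0 <= w u) -> gd (fun x => In x l) (weighted w l).
Proof. intro Hw. unfold weighted, gd. rewrite Forall_forall. intros [p x] Hin. apply in_map_iff in Hin.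
 destruct Hin as [u [Hu Hin]]. inversion Hu; subst. simpl. split; auto.
 assert (0 <= fold_right Rplus 0 (map w l)) by (apply (sumf_nonneg l w); auto).
 unfold Rdiv. destruct H. apply Rmult_le_pos; auto. left; apply Rinv_0_lt_compat; auto.
 rewrite <- H. rewrite Rinv_0; lra. Qed.

Lemma gd_true {A} (P : A -> Prop) m : gd P m -> gd (fun _ => True) m.
Proof. apply gd_weaken. auto. Qed.

Lemma gd_iid {A} k (m : Defs.dist A) P : gd P m -> gd (fun _ => True) (iid k m).
Proof. intro H. induction k; simpl. apply gd_ret; auto.
 eapply gd_bind. eauto. intros. eapply gd_bind. eauto. intros. apply gd_ret; auto. Qed.

Definition newS (G : state) (u : nat) (us : list nat) : state :=
  mkState (col G ++ [length (seeds G)]) (seeds G ++ [nnodes G])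
          (edges G ++ map (fun w => (nnodes G, w)) (u :: us)).
Definition joinS (G : state) (c : nat) (us : list nat) : state :=
  mkState (col G ++ [c]) (seeds G) (edges G ++ map (fun w => (nnodes G, w)) us).

Lemma step_unfold a d i G : step a d i G =
  mix (p_ a i)
    (bind (weighted (deg G) (seq 0 (nnodes G))) (fun u =>
     bind (iid (d - 1)%nat (uniform (seeds G))) (fun us => ret (newS G u us))))
    (bind (uniform (seq 0 (length (seeds G)))) (fun c =>
     bind (iid d (weighted (deg G) (nodes_of_color G c))) (fun us => ret (joinS G c us)))).
Proof. reflexivity. Qed.

Lemma deg_nonneg G u : 0 <= deg G u.
Proof. unfold deg. apply pos_INR. Qed.

Lemma deg_app c s e e' u : deg (mkState c s e) u <= deg (mkState c s (e ++ e')) u.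
Proof. unfold deg; simpl. apply le_INR. rewrite !filter_app, !length_app. lia. Qed.

Lemma deg_irrel c s c' s' e u : deg (mkState c s e) u = deg (mkState c' s' e) u.
Proof. reflexivity. Qed.

Lemma color_of_app_old G x s e u : (u < nnodes G)%nat ->
  color_of (mkState (col G ++ [x]) s e) u = color_of G u.
Proof. intro H. unfold color_of; simpl. rewrite app_nth1; auto. Qed.

Lemma color_of_app_new G x s e :
  color_of (mkState (col G ++ [x]) s e) (nnodes G) = x.
Proof. unfold color_of, nnodes; simpl. rewrite app_nth2 by lia. rewrite Nat.sub_diag. reflexivity. Qed.

Lemma nnodes_app G x s e : nnodes (mkState (col G ++ [x]) s e) = S (nnodes G).
Proof. unfold nnodes; simpl. rewrite length_app; simpl. lia. Qed.

Lemma noc_app G x s e c :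
  nodes_of_color (mkState (col G ++ [x]) s e) c =
  nodes_of_color G c ++ (if Nat.eqb x c then [nnodes G] else []).
Proof. unfold nodes_of_color at 1. rewrite nnodes_app, seq_S, filter_app. simpl (0 + _)%nat.
 f_equal.
 - unfold nodes_of_color. apply filter_ext_in. intros u Hu. apply in_seq in Hu.
   rewrite color_of_app_old; auto. lia.
 - simpl. rewrite color_of_app_new. destruct (Nat.eqb x c); reflexivity. Qed.

Definition Inv (G : state) : Prop :=
  (1 <= length (seeds G))%nat /\
  forall c, (c < length (seeds G))%nat ->
    (nth c (seeds G) O < nnodes G)%nat /\ color_of G (nth c (seeds G) O) = c /\
    0 < deg G (nth c (seeds G) O).

Lemma tot_pos_of w l x : (forall u, 0 <= w u) -> In x l -> 0 < w x -> tot w l <> 0.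
Proof. intros Hw Hx Hp. rewrite tot_sumf. assert (w x <= sumf l w) by (apply sumf_ge_elem; auto). lra. Qed.

Lemma Inv_tot_all G : Inv G -> tot (deg G) (seq 0 (nnodes G)) <> 0.
Proof. intros [H1 H]. destruct (H 0%nat) as [Ha [Hb Hc]]. lia.
 eapply tot_pos_of. apply deg_nonneg. apply in_seq. split; [lia|]. simpl. exact Ha. exact Hc. Qed.

Lemma Inv_tot_col G c : Inv G -> (c < length (seeds G))%nat -> tot (deg G) (nodes_of_color G c) <> 0.
Proof. intros [H1 H] Hc. destruct (H c Hc) as [Ha [Hb Hd]].
 eapply tot_pos_of. apply deg_nonneg. unfold nodes_of_color. apply filter_In. split.
 apply in_seq. split; [lia|]. simpl. exact Ha. rewrite Hb. apply Nat.eqb_refl. exact Hd. Qed.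

Lemma Inv_newS G u us : Inv G -> Inv (newS G u us).
Proof. intros [H1 H]. unfold newS. split; simpl. rewrite length_app; simpl; lia.
 intros c Hc. rewrite length_app in Hc. simpl in Hc.
 destruct (Nat.lt_ge_cases c (length (seeds G))) as [Hl|Hl].
 - destruct (H c Hl) as [Ha [Hb Hd]]. rewrite app_nth1 by auto. split; [|split].
   + rewrite nnodes_app. lia.
   + rewrite color_of_app_old; auto.
   + eapply Rlt_le_trans. exact Hd. apply (deg_app (col G ++ _) (seeds G ++ _) (edges G)).
 - assert (c = length (seeds G)) by lia. subst c. rewrite app_nth2 by lia. rewrite Nat.sub_diag. simpl.
   split; [|split].
   + rewrite nnodes_app. lia.
   + apply color_of_app_new.
   + unfold deg; simpl. rewrite filter_app, !length_app. simpl. rewrite Nat.eqb_refl. simpl.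
     apply lt_0_INR. lia. Qed.

Lemma Inv_joinS G c us : Inv G -> Inv (joinS G c us).
Proof. intros [H1 H]. unfold joinS. split; simpl. auto.
 intros c' Hc. destruct (H c' Hc) as [Ha [Hb Hd]]. split; [|split].
 + rewrite nnodes_app. lia.
 + rewrite color_of_app_old; auto.
 + eapply Rlt_le_trans. exact Hd. apply (deg_app (col G ++ _) (seeds G) (edges G)). Qed.


Lemma exp_le x y : x <= y -> exp x <= exp y.
Proof. intros [H|H]. left; apply exp_increasing; auto. subst; lra. Qed.
Lemma ln_le x y : 0 < x -> x <= y -> ln x <= ln y.
Proof. intros H [H'|H']. left; apply ln_increasing; auto. subst; lra. Qed.

Lemma p_range a i : 0 <= a -> (3 <= i)%nat -> 0 <= p_ a i <= 1.
Proof. intros Ha Hi. unfold p_, Rpower.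
 assert (1 <= ln (INR i)). { rewrite <- (ln_exp 1). apply ln_le. apply exp_pos.
   apply Rle_trans with 3. apply exp_le_3. replace 3 with (INR 3) by (simpl; ring). apply le_INR. auto. }
 split. left; apply exp_pos. rewrite <- exp_0. apply exp_le.
 assert (0 <= ln (ln (INR i))). { rewrite <- ln_1. apply ln_le; lra. } nra. Qed.

Definition edge_irrel (V : state -> R) := forall c s e e', V (mkState c s e) = V (mkState c s e').

Lemma E_step a d i G V : Inv G -> edge_irrel V ->
  E (step a d i G) V = p_ a i * V (newS G O []) +
    (1 - p_ a i) * (/ INR (length (seeds G)) * sumf (seq 0 (length (seeds G))) (fun c => V (joinS G c []))).
Proof. intros HI HV. rewrite step_unfold, E_mix, !E_bind. f_equal.
 - f_equal. rewrite (E_ext _ _ (fun _ => V (newS G O []))). rewrite E_const, mass_weighted. ring.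
   apply Inv_tot_all; auto.
   intro u. rewrite E_bind. rewrite (E_ext _ _ (fun _ => V (newS G O []))). rewrite E_const, mass_iid. ring.
   apply mass_uniform. destruct HI as [H1 _]. destruct (seeds G); simpl in H1; [lia|congruence].
   intro us. rewrite E_ret. apply HV.
 - f_equal. rewrite E_uniform, length_seq. f_equal. apply sumf_ext. intros c Hc. apply in_seq in Hc.
   rewrite E_bind. rewrite (E_ext _ _ (fun _ => V (joinS G c []))). rewrite E_const, mass_iid. ring.
   apply mass_weighted. apply Inv_tot_col; auto. lia.
   intro us. rewrite E_ret. apply HV. Qed.

Lemma gd_step a d i G : Inv G -> 0 <= p_ a i <= 1 ->
  gd (fun G' => Inv G' /\ nnodes G' = S (nnodes G)) (step a d i G).
Proof. intros HI Hp. rewrite step_unfold. apply gd_mix; auto.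
 - eapply gd_bind. eapply gd_true. apply gd_weighted. apply deg_nonneg. intros u _.
   eapply gd_bind. eapply gd_iid. apply gd_uniform. intros us _. apply gd_ret. split.
   apply Inv_newS; auto. unfold newS. apply nnodes_app.
 - eapply gd_bind. eapply gd_true. apply gd_uniform. intros c _.
   eapply gd_bind. eapply gd_iid. apply gd_weighted. apply deg_nonneg. intros us _. apply gd_ret. split.
   apply Inv_joinS; auto. unfold joinS. apply nnodes_app. Qed.

Lemma E_ext_on {A} (P : A -> Prop) m f g : gd P m -> (forall x, P x -> f x = g x) -> E m f = E m g.
Proof. intros H Hfg. apply Rle_antisym; eapply E_mono; eauto; intros x Hx; rewrite (Hfg x Hx); lra. Qed.

Lemma Inv_G2 : Inv G2.
Proof. split. simpl; lia. intros c Hc. simpl in Hc.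
 destruct c as [|[|c]]; [| |lia]; unfold color_of, deg; simpl; split; try split; auto; try lia; lra. Qed.

Lemma model_gd a d k : 0 <= a -> gd (fun G => Inv G /\ nnodes G = (k + 2)%nat) (model_aux a d k).
Proof. intro Ha. induction k; simpl. apply gd_ret. split. apply Inv_G2. reflexivity.
 eapply gd_bind. exact IHk. intros G [HI HG]. eapply gd_weaken; [|apply gd_step; auto].
 intros G' [H1 H2]. split; auto. lia. apply p_range; auto. lia. Qed.

Lemma step_mass a d i G : Inv G -> E (step a d i G) (fun _ => 1) = 1.
Proof. intro HI. rewrite E_step; auto. 2: intro; reflexivity.
 rewrite sumf_const, length_seq. destruct HI as [H1 _].
 assert (0 < INR (length (seeds G))) by (apply lt_0_INR; lia). field. lra. Qed.

Lemma model_mass a d k : 0 <= a -> E (model_aux a d k) (fun _ => 1) = 1.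
Proof. intro Ha. induction k. simpl. exact (E_ret G2 (fun _ => 1)). change (model_aux a d (S k)) with
  (bind (model_aux a d k) (step a d (S k + 2))). rewrite E_bind.
 transitivity (E (model_aux a d k) (fun _ => 1)); [|exact IHk]. eapply E_ext_on. apply model_gd; auto. intros G [HI HG]. apply step_mass; auto. Qed.

Lemma supermart a d (V : nat -> state -> R) k0 N : 0 <= a ->
  (forall t G, (k0 + 2 <= t)%nat -> (t < N)%nat -> Inv G -> nnodes G = t ->
     E (step a d (S t) G) (V (S t)) <= V t G) ->
  forall j, (k0 + j + 2 <= N)%nat ->
    E (model_aux a d (k0 + j)) (V (k0 + j + 2)%nat) <= E (model_aux a d k0) (V (k0 + 2)%nat).
Proof. intros Ha H j. induction j; intro Hj.
 - rewrite Nat.add_0_r. lra.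
 - replace (k0 + S j)%nat with (S (k0 + j)) by lia.
   change (model_aux a d (S (k0+j))) with (bind (model_aux a d (k0+j)) (step a d (S (k0+j) + 2))).
   rewrite E_bind. eapply Rle_trans; [|apply IHj; lia].
   eapply E_mono. apply model_gd; auto. intros G [HI HG].
   replace (S (k0 + j) + 2)%nat with (S (k0 + j + 2)) by lia.
   replace (S (k0 + j) + 2)%nat with (S (k0 + j + 2)) by lia.
   apply H; auto; lia. Qed.

Lemma seq_tail t n : (t < n)%nat -> seq (S t) (n - t) = S t :: seq (S (S t)) (n - S t).
Proof. intro H. replace (n - t)%nat with (S (n - S t)) by lia. reflexivity. Qed.

Definition V1 a n t G := INR (length (seeds G)) + sumf (seq (S t) (n - t)) (p_ a).

Lemma EC_bound a d n : 0 <= a -> (2 <= n)%nat ->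
  E (model_aux a d (n - 2)) (fun G => INR (length (seeds G))) <= 2 + sumf (seq 3 (n - 2)) (p_ a).
Proof. intros Ha Hn.
 pose proof (supermart a d (V1 a n) 0 n Ha) as H.
 assert (H' : E (model_aux a d (0 + (n-2))) (V1 a n (0 + (n-2) + 2)%nat) <= E (model_aux a d 0) (V1 a n (0 + 2)%nat)).
 { apply H; [|lia]. clear H. intros t G Ht Htn HI HG.
   rewrite E_step; auto. 2: intro; reflexivity.
   unfold V1, newS, joinS; simpl. rewrite length_app. simpl. rewrite (seq_tail t n Htn), sumf_cons.
   rewrite !sumf_const, length_seq, Nat.add_1_r, S_INR. destruct HI as [H1 _].
   assert (0 < INR (length (seeds G))) by (apply lt_0_INR; lia).
   field_simplify; [lra|lra]. }
 simpl (0 + _)%nat in H'. replace (n - 2 + 2)%nat with n in H' by lia.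
 eapply Rle_trans; [|eapply Rle_trans; [exact H'|]].
 - right. apply E_ext. intro G. unfold V1. rewrite Nat.sub_diag. simpl seq. rewrite sumf_nil. ring.
 - simpl. rewrite E_ret. unfold V1. simpl. lra. Qed.

Definition c1 := 1 - exp (-1).
Lemma c1_range : 0 < c1 < 1.
Proof. unfold c1. pose proof (exp_pos (-1)). assert (exp (-1) < 1). rewrite <- exp_0. apply exp_increasing. lra. lra. Qed.

Definition term (T0 : R) (G : state) (c : nat) : R :=
  if Rlt_dec (INR (color_time G c)) T0 then exp (- INR (length (nodes_of_color G c))) else 0.
Definition Sfun T0 G := sumf (seq 0 (length (seeds G))) (term T0 G).

Lemma term_range T0 G c : 0 <= term T0 G c <= 1.
Proof. unfold term. destruct Rlt_dec. split. left; apply exp_pos. rewrite <- exp_0. apply exp_le.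
 pose proof (pos_INR (length (nodes_of_color G c))). lra. lra. Qed.

Lemma Sfun_range T0 G : 0 <= Sfun T0 G <= INR (length (seeds G)).
Proof. unfold Sfun. split. apply sumf_nonneg. intros; apply term_range.
 apply Rle_trans with (sumf (seq 0 (length (seeds G))) (fun _ => 1)).
 apply sumf_mono. intros; apply term_range. rewrite sumf_const, length_seq. lra. Qed.

Lemma Sfun_newS T0 G : T0 <= INR (S (nnodes G)) -> Sfun T0 (newS G O []) = Sfun T0 G.
Proof. intro HT. unfold Sfun, newS. simpl seeds. rewrite length_app. simpl length.
 rewrite Nat.add_1_r, seq_S, sumf_app. simpl (0 + _)%nat. rewrite sumf_cons, sumf_nil.
 replace (term T0 _ (length (seeds G))) with 0.
 - rewrite !Rplus_0_r. apply sumf_ext. intros c Hc. apply in_seq in Hc. unfold term.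
   unfold color_time; simpl. rewrite app_nth1 by lia. rewrite noc_app.
   destruct (Nat.eqb_spec (length (seeds G)) c). lia. rewrite app_nil_r. reflexivity.
 - unfold term, color_time; simpl. rewrite app_nth2 by lia. rewrite Nat.sub_diag. simpl.
   unfold nnodes in *. destruct Rlt_dec as [r|r]; auto. change (INR (S (length (col G))) < T0) in r. lra. Qed.

Lemma Sfun_joinS T0 G c0 : (c0 < length (seeds G))%nat ->
  Sfun T0 (joinS G c0 []) = Sfun T0 G - c1 * term T0 G c0.
Proof. intro Hc0. unfold Sfun. simpl seeds.
 rewrite (sumf_ext _ _ (fun c => 1 * term T0 G c + (-1) * (if Nat.eqb c c0 then c1 * term T0 G c else 0))).
 - rewrite sumf_linear, sumf_delta; auto. ring.
 - intros c Hc. unfold joinS, term, color_time. simpl seeds. rewrite noc_app.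
   destruct (Nat.eqb_spec c0 c), (Nat.eqb_spec c c0); try lia.
   + subst. rewrite length_app. simpl length. rewrite plus_INR. simpl (INR 1).
     destruct Rlt_dec; [|ring]. rewrite Ropp_plus_distr, exp_plus. unfold c1. replace (- (1)) with (-1) by ring. ring.
   + rewrite app_nil_r. ring. Qed.

Definition ind (M : R) (G : state) : R := if Rle_dec (INR (length (seeds G))) M then 1 else 0.
Definition Rt a M n t := exp (- (c1 / M) * sumf (seq (S t) (n - t)) (fun i => 1 - p_ a i)).
Definition Psi a M n T0 t G := ind M G * Sfun T0 G * Rt a M n t.

Lemma Psi_step a d M n T0 t G : 0 <= a -> 0 < M -> (t < n)%nat -> (2 <= t)%nat -> T0 <= INR (S t) ->
  Inv G -> nnodes G = t ->
  E (step a d (S t) G) (Psi a M n T0 (S t)) <= Psi a M n T0 t G.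
Proof. intros Ha HM Htn Ht2 HT HI HG.
 pose proof (p_range a (S t) Ha ltac:(lia)) as Hp.
 rewrite E_step; auto. 2: intro; reflexivity.
 set (p := p_ a (S t)) in *. set (C := length (seeds G)).
 assert (HC : 0 < INR C) by (apply lt_0_INR; destruct HI; unfold C; lia).
 set (r := Rt a M n (S t)).
 assert (Hr : 0 <= r) by (left; apply exp_pos).
 assert (HRt : Rt a M n t = exp (- (c1 / M) * (1 - p)) * r).
 { unfold r, Rt. rewrite (seq_tail t n Htn), sumf_cons, <- exp_plus. f_equal. unfold p. ring. }
 unfold Psi at 1. rewrite Sfun_newS by (rewrite HG; auto).
 rewrite (sumf_ext _ _ (fun c => (ind M G * Sfun T0 G * r) * 1 + (- (ind M G * c1 * r)) * term T0 G c)).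
 2: { intros c Hc. apply in_seq in Hc. unfold Psi. rewrite Sfun_joinS by (unfold C in Hc; lia).
      unfold ind, joinS; simpl seeds. fold r. ring. }
 rewrite sumf_linear, sumf_const, length_seq. fold (Sfun T0 G). fold C.
 unfold Psi. rewrite HRt. fold r.
 pose proof (Sfun_range T0 G) as [HS _]. set (S := Sfun T0 G) in *.
 pose proof c1_range as Hc1.
 unfold ind. unfold newS; simpl seeds. rewrite length_app; simpl length. fold C.
 destruct (Rle_dec (INR C) M) as [HCM|HCM].
 - assert (Hi : 0 <= (if Rle_dec (INR (C + 1)) M then 1 else 0) <= 1) by (destruct Rle_dec; lra).
   set (i' := if Rle_dec (INR (C + 1)) M then 1 else 0) in *.
   assert (Hq : c1 / M <= c1 / INR C). { unfold Rdiv. apply Rmult_le_compat_l. lra.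
     apply Rinv_le_contravar; auto. }
   pose proof (exp_ineq1_le (- (c1 / M) * (1 - p))) as He.
   set (e := exp (- (c1 / M) * (1 - p))) in *.
   change (sumf (seq 0 C) (term T0 G)) with S.
   replace (/ INR C * (1 * S * r * (INR C * 1) + - (1 * c1 * r) * S)) with (S * r - (c1 / INR C) * S * r)
     by (field; lra).
   set (q := c1 / INR C) in *. set (qM := c1 / M) in *.
   assert (p * i' * S * r <= p * S * r). { apply Rmult_le_compat_r; auto. apply Rmult_le_compat_r; auto. nra. }
   assert (0 <= S * r) by nra.
   assert ((1 - p) * q * (S * r) >= (1 - p) * qM * (S * r)). { apply Rle_ge. apply Rmult_le_compat_r; auto. apply Rmult_le_compat_l; lra. }
   nra.
 - destruct (Rle_dec (INR (C + 1)) M) as [H'|H']. rewrite plus_INR in H'. simpl in H'. lra.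
   replace (/ INR C * (0 * S * r * INR C + - (0 * c1 * r) * S)) with 0 by (field; lra). lra. Qed.

Lemma forallb_false {A} (f : A -> bool) l : forallb f l = false -> exists x, In x l /\ f x = false.
Proof. induction l; simpl. discriminate. destruct (f a) eqn:Ha; simpl.
 intro H; destruct (IHl H) as [x [? ?]]; eauto. intros _; eauto. Qed.

Lemma Psi_nonneg a M n T0 t G : 0 <= Psi a M n T0 t G.
Proof. unfold Psi. apply Rmult_le_pos. apply Rmult_le_pos. unfold ind; destruct Rle_dec; lra.
 apply Sfun_range. left; apply exp_pos. Qed.

Lemma indicator_bound a M n T0 B G : 0 < M ->
  1 - INR (length (seeds G)) / M - exp B * Psi a M n T0 n G <=
  (if early_sets_large T0 B G then 1 else 0).
Proof. intro HM. pose proof (Psi_nonneg a M n T0 n G).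
 assert (0 <= INR (length (seeds G)) / M) by (unfold Rdiv; apply Rmult_le_pos; [apply pos_INR|left; apply Rinv_0_lt_compat; auto]).
 assert (0 <= exp B * Psi a M n T0 n G) by (apply Rmult_le_pos; [left; apply exp_pos|auto]).
 destruct (early_sets_large T0 B G) eqn:Hg. lra.
 unfold early_sets_large in Hg. apply forallb_false in Hg. destruct Hg as [c [Hc Hf]].
 apply in_seq in Hc.
 destruct (Rlt_dec (INR (color_time G c)) T0) as [Hct|Hct]; [|discriminate].
 destruct (Rle_dec B (INR (length (nodes_of_color G c)))) as [HB|HB]; [discriminate|].
 destruct (Rle_dec (INR (length (seeds G))) M) as [HCM|HCM].
 - assert (Hpsi : Psi a M n T0 n G = Sfun T0 G).
   { unfold Psi, ind, Rt. destruct Rle_dec; [|lra]. rewrite Nat.sub_diag. simpl seq. rewrite sumf_nil.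
     rewrite Rmult_0_r, exp_0. ring. }
   assert (term T0 G c <= Sfun T0 G). { unfold Sfun. apply sumf_ge_elem. intros; apply term_range.
     apply in_seq; lia. }
   unfold term in H2. destruct Rlt_dec; [|contradiction].
   assert (exp (- B) < exp (- INR (length (nodes_of_color G c)))) by (apply exp_increasing; lra).
   assert (exp B * exp (- B) = 1) by (rewrite <- exp_plus; replace (B + - B) with 0 by ring; apply exp_0).
   assert (0 < exp B) by apply exp_pos. nra.
 - assert (1 < INR (length (seeds G)) / M). { apply Rlt_gt in HM. unfold Rdiv.
     apply Rmult_lt_reg_r with M; auto. rewrite Rmult_assoc, Rinv_l by lra. lra. }
   lra. Qed.

Lemma main_bound a d n T0 M B s : 0 <= a -> 0 < M -> (2 <= s)%nat -> (s <= n)%nat -> T0 <= INR (S s) ->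
  1 - (2 + sumf (seq 3 (n - 2)) (p_ a)) / M - exp B * (M * Rt a M n s)
  <= prob (security_model a d n) (early_sets_large T0 B).
Proof. intros Ha HM Hs Hsn HT. rewrite prob_E. unfold security_model.
 eapply Rle_trans; [|eapply E_mono; [apply model_gd; auto|intros G _; apply (indicator_bound a M n T0 B G HM)]].
 rewrite (E_ext _ _ (fun G => 1 * 1 + (- (/ M)) * (INR (length (seeds G)) + (M * exp B) * Psi a M n T0 n G))).
 2: { intro G. field. lra. }
 rewrite E_linear, model_mass by auto.
 rewrite (E_ext _ (fun G => _ + _) (fun G => 1 * INR (length (seeds G)) + (M * exp B) * Psi a M n T0 n G)) by (intro; ring).
 rewrite E_linear.
 pose proof (EC_bound a d n Ha ltac:(lia)).
 assert (HP : E (model_aux a d (n - 2)) (Psi a M n T0 n) <= M * Rt a M n s).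
 { pose proof (supermart a d (Psi a M n T0) (s - 2) n Ha) as Hsm.
   assert (Hq := Hsm ltac:(intros t G Ht Htn HI HG; apply Psi_step; auto; try lia;
       eapply Rle_trans; [exact HT|]; apply le_INR; lia) (n - s)%nat ltac:(lia)).
   replace (s - 2 + (n - s))%nat with (n - 2)%nat in Hq by lia.
   replace (n - 2 + 2)%nat with n in Hq by lia.
   replace (s - 2 + 2)%nat with s in Hq by lia.
   eapply Rle_trans; [exact Hq|].
   eapply Rle_trans. eapply E_mono. apply model_gd; auto.
   intros G _. instantiate (1 := fun _ => M * Rt a M n s).
   unfold Psi, ind. pose proof (Sfun_range T0 G). assert (0 <= Rt a M n s) by (left; apply exp_pos).
   destruct Rle_dec. rewrite Rmult_1_l. apply Rmult_le_compat_r; lra. rewrite !Rmult_0_l. nra.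
   rewrite E_const, model_mass by auto. lra. }
 assert (0 < exp B) by apply exp_pos.
 assert (0 < / M) by (apply Rinv_0_lt_compat; auto).
 unfold Rdiv. 
 assert (/M * E (model_aux a d (n - 2)) (fun G => INR (length (seeds G))) <= / M * (2 + sumf (seq 3 (n - 2)) (p_ a))) by (apply Rmult_le_compat_l; lra).
 assert (/M * (M * exp B) * E (model_aux a d (n - 2)) (Psi a M n T0 n) <= exp B * (M * Rt a M n s)).
 { replace (/M * (M * exp B)) with (exp B) by (field; lra). apply Rmult_le_compat_l; lra. }
 nra. Qed.

Lemma count_le (y : R) m : 0 <= y ->
  sumf (seq 0 m) (fun i => if Rle_dec (INR i) y then 1 else 0) <= y + 1.
Proof. intro Hy. induction m. simpl seq; rewrite sumf_nil; lra.
 rewrite seq_S, sumf_app, sumf_cons, sumf_nil. simpl (0 + m)%nat.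
 destruct (Rle_dec (INR m) y).
 - assert (sumf (seq 0 m) (fun i => if Rle_dec (INR i) y then 1 else 0) <= INR m).
   { apply Rle_trans with (sumf (seq 0 m) (fun _ => 1)). apply sumf_mono. intros; destruct Rle_dec; lra.
     rewrite sumf_const, length_seq. lra. } lra.
 - lra. Qed.

Lemma Rpower_neg_le x y a : 0 <= a -> 1 <= x -> x <= y -> Rpower y (- a) <= Rpower x (- a).
Proof. intros Ha Hx Hxy. unfold Rpower. apply exp_le.
 assert (ln x <= ln y) by (apply ln_le; lra). nra. Qed.

Lemma sum_p_bound a n y : 0 <= a -> (2 <= n)%nat -> 0 < y -> 1 <= ln y ->
  sumf (seq 3 (n - 2)) (p_ a) <= y + 1 + (INR n + 1) * Rpower (ln y) (- a).
Proof. intros Ha Hn Hy Hly.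
 set (f := fun i => (if Rle_dec (INR i) y then 1 else 0) + Rpower (ln y) (- a)).
 assert (Hf0 : forall i, 0 <= f i). { intro i. unfold f. pose proof (exp_pos (- a * ln (ln y))).
   unfold Rpower. destruct Rle_dec; lra. }
 apply Rle_trans with (sumf (seq 3 (n - 2)) f).
 { apply sumf_mono. intros i Hi. apply in_seq in Hi. unfold f.
   pose proof (p_range a i Ha ltac:(lia)) as Hp. pose proof (exp_pos (- a * ln (ln y))).
   destruct (Rle_dec (INR i) y). unfold Rpower in *; lra.
   unfold p_. apply Rle_trans with (Rpower (ln y) (- a)); [|lra].
   apply Rpower_neg_le; auto. apply ln_le; lra. }
 apply Rle_trans with (sumf (seq 0 (n + 1)) f).
 { replace (n + 1)%nat with (3 + (n - 2))%nat by lia. rewrite seq_app, sumf_app.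
   assert (0 <= sumf (seq 0 3) f) by (apply sumf_nonneg; auto). simpl (0 + 3)%nat. lra. }
 unfold f. rewrite (sumf_ext _ _ (fun i => 1 * (if Rle_dec (INR i) y then 1 else 0) + Rpower (ln y) (- a) * 1))
   by (intros; ring).
 rewrite sumf_linear, sumf_const, length_seq.
 pose proof (count_le y (n + 1) ltac:(lra)). rewrite plus_INR. simpl (INR 1).
 lra. Qed.

Lemma p_half a x : 1 <= a -> 2 <= x -> Rpower x (- a) <= / 2.
Proof. intros Ha Hx. apply Rle_trans with (Rpower x (- (1))). apply Rle_Rpower; lra.
 rewrite Rpower_Ropp, Rpower_1 by lra. apply Rinv_le_contravar; lra. Qed.

Lemma Rt_bound a M n T0 s : (1 <= n)%nat -> 1 <= a -> 0 < M -> (s <= n)%nat -> INR s <= T0 -> INR n / 2 <= T0 ->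
  T0 <= INR (S s) -> 2 <= ln (INR n / 2) ->
  Rt a M n s <= exp (- (c1 / M) * ((INR n - T0) / 2)).
Proof. intros Hn1 Ha HM Hsn Hs HT0 HT1 Hl. unfold Rt. apply exp_le.
 assert (0 < c1 / M) by (pose proof c1_range; unfold Rdiv; apply Rmult_lt_0_compat; [lra|apply Rinv_0_lt_compat; lra]).
 enough ((INR n - T0) / 2 <= sumf (seq (S s) (n - s)) (fun i => 1 - p_ a i)) by nra.
 apply Rle_trans with (sumf (seq (S s) (n - s)) (fun _ => / 2)).
 - rewrite sumf_const, length_seq, minus_INR by auto. lra.
 - apply sumf_mono. intros i Hi. apply in_seq in Hi.
   assert (INR (S s) <= INR i) by (apply le_INR; lia).
   assert (0 < INR n / 2). { assert (0 < INR n). apply lt_0_INR. lia. lra. }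
   assert (Hli : 2 <= ln (INR i)). { eapply Rle_trans. exact Hl. apply ln_le; lra. }
   unfold p_. pose proof (p_half a (ln (INR i)) Ha Hli). lra. Qed.

Lemma exists_s x : 0 <= x -> exists s : nat, INR s <= x /\ x < INR (S s).
Proof. intro Hx. destruct (archimed x) as [H1 H2]. set (z := up x) in *.
 assert (Hz : (0 < z)%Z) by (apply lt_IZR; lra).
 exists (Z.to_nat z - 1)%nat.
 assert (HS : INR (S (Z.to_nat z - 1)) = IZR z).
 { replace (S (Z.to_nat z - 1)) with (Z.to_nat z) by lia. rewrite INR_IZR_INZ, Z2Nat.id by lia. reflexivity. }
 rewrite S_INR in *. split; lra. Qed.

Lemma term1_alg y u v K2 : 1 <= y -> 0 < u -> 0 < v -> 0 <= K2 ->
  (2 + (y + 1 + (y * y + 1) * (K2 * (v * u)))) / (y * y * u) <= 4 / (y * u) + 2 * K2 * v.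
Proof. intros Hy Hu Hv HK.
 assert (0 < y * u) by nra.
 replace ((2 + (y + 1 + (y * y + 1) * (K2 * (v * u)))) / (y * y * u))
   with ((3 + y) / y * / (y * u) + (1 + / (y * y)) * K2 * v) by (field; lra).
 assert ((3 + y) / y <= 4). { apply Rmult_le_reg_r with y. lra. unfold Rdiv. rewrite Rmult_assoc, Rinv_l by lra. lra. }
 assert (/ (y * y) <= 1). { rewrite <- Rinv_1. apply Rinv_le_contravar. lra. nra. }
 assert (0 < / (y * u)) by (apply Rinv_0_lt_compat; lra).
 assert (0 <= K2 * v) by nra.
 unfold Rdiv at 2. nra. Qed.

Lemma ln2_le1 : ln 2 <= 1.
Proof. rewrite <- (ln_exp 1). apply ln_le. lra. pose proof (exp_ineq1_le 1). lra. Qed.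

Lemma bound_n a d b0 b1 n : 4 < a -> 0 < b0 -> 2 < b1 -> b1 < a - b0 -> (2 <= n)%nat ->
  4 <= ln (INR n) -> exp (- b0 * ln (ln (INR n))) <= / 2 ->
  1 - (4 * exp ((a - (a - b0 - b1) / 2) * ln (ln (INR n))) / exp (ln (INR n) / 2)
       + 2 * exp (a * ln 2) * exp (- ((a - b0 - b1) / 2) * ln (ln (INR n)))
       + exp (exp (b1 * ln (ln (INR n))) + ln (INR n)
              - c1 / 2 * exp ((b1 + (a - b0 - b1) / 2) * ln (ln (INR n)))))
  <= prob (security_model a d n)
        (early_sets_large ((1 - Rpower (ln (INR n)) (- b0)) * INR n) (1 * Rpower (ln (INR n)) b1)).
Proof. intros Ha Hb0 Hb1 Hb Hn HL Hd.
 set (L := ln (INR n)) in *. set (l := ln L) in *. set (eta := (a - b0 - b1) / 2) in *.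
 set (a' := a - eta).
 assert (Heta : 0 < eta) by (unfold eta; lra).
 assert (Ha' : 0 < a') by (unfold a', eta; lra).
 assert (Hn0 : 0 < INR n) by (apply lt_0_INR; lia).
 assert (HnL : INR n = exp L) by (unfold L; rewrite exp_ln; auto).
 assert (Hl0 : 0 <= l) by (unfold l; rewrite <- ln_1; apply ln_le; lra).
 set (y := exp (L / 2)).
 assert (Hyy : INR n = y * y) by (unfold y; rewrite HnL, <- exp_plus; f_equal; field).
 assert (Hy1 : 1 <= y) by (unfold y; pose proof (exp_ineq1_le (L / 2)); lra).
 set (u := exp (- a' * l)). assert (Hu : 0 < u) by apply exp_pos.
 assert (Hu1 : u <= 1) by (unfold u; rewrite <- exp_0; apply exp_le; nra).
 set (M := INR n * u). assert (HM : 0 < M) by (unfold M; nra).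
 assert (HRp : Rpower L (- b0) = exp (- b0 * l)) by reflexivity.
 set (T0 := (1 - Rpower L (- b0)) * INR n).
 assert (HT0a : INR n / 2 <= T0) by (unfold T0; rewrite HRp; nra).
 assert (HT0b : T0 <= INR n) by (unfold T0; rewrite HRp; pose proof (exp_pos (- b0 * l)); nra).
 destruct (exists_s T0) as [s [Hs1 Hs2]]. lra.
 assert (Hn5 : 5 <= INR n) by (rewrite HnL; pose proof (exp_ineq1_le L); lra).
 assert (Hs : (2 <= s)%nat). { destruct s as [|[|s]]; try lia; simpl in Hs2; lra. }
 assert (Hsn : (s <= n)%nat) by (apply INR_le; lra).
 pose proof (main_bound a d n T0 M (1 * Rpower L b1) s ltac:(lra) HM Hs Hsn ltac:(lra)) as Hmain.
 eapply Rle_trans; [|exact Hmain].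
 assert (Hly : ln y = L / 2) by (unfold y; apply ln_exp).
 pose proof (sum_p_bound a n y ltac:(lra) Hn ltac:(lra) ltac:(lra)) as Hsum.
 set (K2 := exp (a * ln 2)). set (v := exp (- eta * l)).
 assert (HRa : Rpower (ln y) (- a) = K2 * (v * u)).
 { unfold Rpower, K2, v, u. rewrite Hly, <- !exp_plus. f_equal.
   unfold Rdiv. rewrite ln_mult, ln_Rinv by lra. fold l. unfold a'. ring. }
 rewrite HRa, Hyy in Hsum.
 assert (T1 : (2 + sumf (seq 3 (n - 2)) (p_ a)) / M <= 4 / (y * u) + 2 * K2 * v).
 { eapply Rle_trans; [|apply term1_alg; auto; try apply exp_pos; unfold K2; left; apply exp_pos].
   unfold M. rewrite Hyy. unfold Rdiv. apply Rmult_le_compat_r. left; apply Rinv_0_lt_compat; nra.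
   lra. }
 assert (HRt := Rt_bound a M n T0 s ltac:(lia) ltac:(lra) HM Hsn Hs1 HT0a ltac:(lra)).
 assert (Hl2 : 2 <= ln (INR n / 2)). { unfold Rdiv. rewrite ln_mult, ln_Rinv by lra. fold L.
   pose proof ln2_le1. lra. }
 specialize (HRt Hl2).
 assert (HE : - (c1 / M) * ((INR n - T0) / 2) = - (c1 / 2 * exp ((b1 + eta) * l))).
 { unfold T0, M. rewrite HRp. replace ((b1 + eta) * l) with (- b0 * l + - (- a' * l)) by (unfold a', eta; field).
   rewrite exp_plus, exp_Ropp. fold u. field. split; lra. }
 rewrite HE in HRt.
 assert (T2 : exp (1 * Rpower L b1) * (M * Rt a M n s) <=
   exp (exp (b1 * l) + L - c1 / 2 * exp ((b1 + eta) * l))).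
 { replace (exp (b1 * l) + L - c1 / 2 * exp ((b1 + eta) * l)) with
     (1 * Rpower L b1 + (L + - (c1 / 2 * exp ((b1 + eta) * l)))) by (unfold Rpower; fold l; ring).
   rewrite !exp_plus. apply Rmult_le_compat_l. left; apply exp_pos.
   apply Rmult_le_compat. lra. left; apply exp_pos. unfold M. rewrite <- HnL. nra.
   eapply Rle_trans. exact HRt. right. f_equal. }
 assert (4 / (y * u) = 4 * exp (a' * l) / exp (L / 2)).
 { unfold u, y. replace (a' * l) with (- (- a' * l)) by ring. rewrite exp_Ropp. field.
   split; apply Rgt_not_eq, exp_pos. }
 fold y in H. lra. Qed.

Lemma exp_small X eps : 0 < eps -> 1 / eps <= X -> exp (- X) < eps.
Proof. intros He HX. rewrite exp_Ropp. pose proof (exp_ineq1_le X). pose proof (exp_pos X).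
 apply Rmult_lt_reg_r with (exp X). auto. rewrite Rinv_l by lra.
 assert (1 <= eps * X). { apply Rmult_le_reg_l with (/ eps). apply Rinv_0_lt_compat; auto.
   rewrite <- Rmult_assoc, Rinv_l, Rmult_1_l, Rmult_1_r by lra. unfold Rdiv in HX. lra. }
 nra. Qed.

Lemma asym_A1 a' eps : 0 < eps -> exists l0, forall l, l0 <= l ->
  4 * exp (a' * l) / exp (exp l / 2) < eps.
Proof. intros He. set (X := 4 / eps).
 exists (8 * Rabs a' + 8 * X + 8). intros l Hl.
 assert (HX : 0 < X) by (unfold X, Rdiv; apply Rmult_lt_0_compat; [lra|apply Rinv_0_lt_compat; lra]).
 assert (Hl0 : 8 <= l) by (pose proof (Rabs_pos a'); lra).
 assert (HL : (1 + l / 2) * (1 + l / 2) <= exp l).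
 { replace l with (l / 2 + l / 2) at 3 by field. rewrite exp_plus. pose proof (exp_ineq1_le (l / 2)).
   apply Rmult_le_compat; lra. }
 replace (4 * exp (a' * l) / exp (exp l / 2)) with (4 * exp (- (exp l / 2 - a' * l))).
 2: { assert (exp (- (exp l / 2 - a' * l)) * exp (exp l / 2) = exp (a' * l)) by (rewrite <- exp_plus; f_equal; ring).
      rewrite <- H. field. apply Rgt_not_eq, exp_pos. }
 assert (exp (- (exp l / 2 - a' * l)) < eps / 4).
 { apply exp_small. lra. pose proof (Rle_abs a'). pose proof (Rabs_pos a').
   replace (1 / (eps / 4)) with X by (unfold X; field; lra).
   assert (a' * l <= Rabs a' * l) by nra. nra. }
 lra. Qed.

Lemma asym_A2 K eta eps : 0 <= K -> 0 < eta -> 0 < eps -> exists l0, forall l, l0 <= l ->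
  K * exp (- eta * l) < eps.
Proof. intros HK He Hep. exists ((K + 1) / eps / eta). intros l Hl.
 assert (exp (- (eta * l)) < eps / (K + 1)).
 { apply exp_small. apply Rdiv_lt_0_compat; lra.
   replace (1 / (eps / (K + 1))) with ((K + 1) / eps) by (field; lra).
   apply Rmult_le_reg_r with (/ eta). apply Rinv_0_lt_compat; auto.
   replace (eta * l * / eta) with l by (field; lra). exact Hl. }
 replace (- eta * l) with (- (eta * l)) by ring.
 pose proof (exp_pos (- (eta * l))).
 assert ((K + 1) * exp (- (eta * l)) < eps).
 { apply Rmult_lt_reg_r with (/ (K + 1)). apply Rinv_0_lt_compat; lra.
   replace ((K + 1) * exp (- (eta * l)) * / (K + 1)) with (exp (- (eta * l))) by (field; lra). exact H. }
 nra. Qed.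

Lemma asym_A3 b1 eta eps : 1 <= b1 -> 0 < eta -> 0 < eps -> exists l0, forall l, l0 <= l ->
  exp (exp (b1 * l) + exp l - c1 / 2 * exp ((b1 + eta) * l)) < eps.
Proof. intros Hb He Hep. set (W := 1 / eps).
 assert (HW : 0 < W) by (unfold W; apply Rdiv_lt_0_compat; lra).
 pose proof c1_range as Hc1.
 exists (2 * (2 + W) / c1 / eta). intros l Hl.
 assert (Hl0 : 0 <= l). { eapply Rle_trans; [|exact Hl]. left. repeat apply Rdiv_lt_0_compat; lra. }
 set (P := exp (b1 * l)). set (Q := exp (eta * l)).
 assert (HP : 1 <= P) by (unfold P; rewrite <- exp_0; apply exp_le; nra).
 assert (HQ : 2 * (2 + W) / c1 <= Q).
 { unfold Q. pose proof (exp_ineq1_le (eta * l)).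
   assert (2 * (2 + W) / c1 <= eta * l). { apply Rmult_le_reg_r with (/ eta). apply Rinv_0_lt_compat; auto.
     replace (eta * l * / eta) with l by (field; lra). exact Hl. } lra. }
 assert (HQ' : 2 + W <= c1 / 2 * Q).
 { apply Rmult_le_reg_r with (2 / c1). apply Rdiv_lt_0_compat; lra.
   replace (c1 / 2 * Q * (2 / c1)) with Q by (field; lra).
   replace ((2 + W) * (2 / c1)) with (2 * (2 + W) / c1) by (field; lra). exact HQ. }
 assert (Hel : exp l <= P) by (unfold P; apply exp_le; nra).
 rewrite Rmult_plus_distr_r, exp_plus. fold P Q.
 eapply Rle_lt_trans; [|apply (exp_small (W * P) eps Hep)].
 - apply exp_le. nra.
 - fold W. nra. Qed.

Lemma asym_cond b0 : 0 < b0 -> exists l0, forall l, l0 <= l ->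
  0 <= l /\ 4 <= exp l /\ exp (- b0 * l) <= / 2.
Proof. intro Hb. exists (3 + 1 / b0). intros l Hl.
 assert (0 < 1 / b0) by (apply Rdiv_lt_0_compat; lra).
 split. lra. split. pose proof (exp_ineq1_le l). lra.
 replace (- b0 * l) with (- (b0 * l)) by ring. rewrite exp_Ropp. apply Rinv_le_contravar. lra.
 pose proof (exp_ineq1_le (b0 * l)).
 assert (1 <= b0 * l). { apply Rmult_le_reg_r with (/ b0). apply Rinv_0_lt_compat; auto.
   replace (b0 * l * / b0) with l by (field; lra). unfold Rdiv in H. rewrite Rmult_1_l. unfold Rdiv in Hl. lra. }
 lra. Qed.

Lemma prob_le1 a d n Ev : 0 <= a -> prob (security_model a d n) Ev <= 1.
Proof. intro Ha. rewrite prob_E. unfold security_model.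
 eapply Rle_trans; [|right; exact (model_mass a d (n - 2) Ha)].
 eapply E_mono. apply model_gd; auto. intros; simpl; destruct (Ev x); lra. Qed.

Theorem lemma13 (a : R) (d : nat) (b0 b1 : R) :
  4 < a -> (4 <= d)%nat -> 0 < b0 -> 2 < b1 -> b1 < a - b0 ->
  exists K : R, 0 < K /\
    Un_cv (fun n : nat =>
      prob (security_model a d n)
        (early_sets_large
           ((1 - Rpower (ln (INR n)) (- b0)) * INR n)
           (K * Rpower (ln (INR n)) b1)))
      1.
Proof. intros Ha Hd Hb0 Hb1 Hb. exists 1. split. lra.
 intros eps Heps. set (eta := (a - b0 - b1) / 2).
 assert (Heta : 0 < eta) by (unfold eta; lra).
 destruct (asym_A1 (a - eta) (eps / 3) ltac:(lra)) as [l1 H1].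
 destruct (asym_A2 (2 * exp (a * ln 2)) eta (eps / 3)) as [l2 H2].
 { pose proof (exp_pos (a * ln 2)); lra. } auto. lra.
 destruct (asym_A3 b1 eta (eps / 3) ltac:(lra) Heta ltac:(lra)) as [l3 H3].
 destruct (asym_cond b0 Hb0) as [l4 H4].
 set (lm := Rmax (Rmax l1 l2) (Rmax l3 l4)).
 destruct (exists_s (exp (exp lm))) as [s [_ Hs]]. left; apply exp_pos.
 exists (S s + 2)%nat. intros n Hn. unfold R_dist.
 assert (Hn1 : exp (exp lm) < INR n) by (eapply Rlt_le_trans; [exact Hs|]; apply le_INR; lia).
 assert (HL : exp lm < ln (INR n)). { rewrite <- (ln_exp (exp lm)). apply ln_increasing. apply exp_pos. auto. }
 assert (Hl : lm < ln (ln (INR n))). { rewrite <- (ln_exp lm). apply ln_increasing. apply exp_pos. auto. }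
 set (l := ln (ln (INR n))) in *.
 assert (HLl : ln (INR n) = exp l). { unfold l. rewrite exp_ln; auto. pose proof (exp_pos lm). lra. }
 assert (Hlm1 : l1 <= l) by (unfold lm in Hl; pose proof (Rmax_l l1 l2); pose proof (Rmax_l (Rmax l1 l2) (Rmax l3 l4)); lra).
 assert (Hlm2 : l2 <= l) by (unfold lm in Hl; pose proof (Rmax_r l1 l2); pose proof (Rmax_l (Rmax l1 l2) (Rmax l3 l4)); lra).
 assert (Hlm3 : l3 <= l) by (unfold lm in Hl; pose proof (Rmax_l l3 l4); pose proof (Rmax_r (Rmax l1 l2) (Rmax l3 l4)); lra).
 assert (Hlm4 : l4 <= l) by (unfold lm in Hl; pose proof (Rmax_r l3 l4); pose proof (Rmax_r (Rmax l1 l2) (Rmax l3 l4)); lra).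
 specialize (H1 l Hlm1). specialize (H2 l Hlm2). specialize (H3 l Hlm3). destruct (H4 l Hlm4) as [_ [H4a H4b]].
 rewrite <- HLl in H1, H3, H4a.
 pose proof (bound_n a d b0 b1 n Ha Hb0 Hb1 Hb ltac:(lia) H4a H4b) as HB.
 fold l in HB. fold eta in HB.
 pose proof (prob_le1 a d n (early_sets_large ((1 - Rpower (ln (INR n)) (- b0)) * INR n) (1 * Rpower (ln (INR n)) b1)) ltac:(lra)).
 rewrite Rabs_left1; lra. Qed.
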